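(* Let $q$ be an odd prime power, $\omega$ a non-square in $\mathbb F_q$, $\epsilon\in\mathbb F_{q^2}$ with $\epsilon^2=\omega$, and write $z=z_1+\epsilon z_2$ ($z_i\in\mathbb F_q$) for $z\in\mathbb F_{q^2}$. Let $a,b,c,d,e\in\mathbb F_{q^2}$ with $b\ne0$, $b_1d_2=b_2d_1$ and $(b_1,d_1)\ne(0,0)$; put $a'=b_1a_2-a_1b_2$, $c'=b_1c_2-b_2c_1$, $e'=b_1e_2-b_2e_1$, not all zero, $\delta'=c'^2-4a'e'$ and $\kappa=a'd_1^2-c'd_1b_1+e'b_1^2$. In $\mathrm{PG}(3,q)$ with coordinates $(t_1:t_2:X:Z)$ let $\Pi$ be the plane $b_1X+d_1Z=0$, $\mathcal Q$ the quadric $b_2t_1^2-2b_1t_1t_2+b_2\omega t_2^2+a'X^2+c'XZ+e'Z^2=0$, and $\mathcal Q_0$ the set of points of $\mathcal Q$ (in $\mathrm{PG}(3,q)$) with $t_1=t_2=0$. Then $\Pi$ meets $\mathcal Q_0$ if and only if $\kappa=0$, in which case $|\Pi\cap\mathcal Q_0|=1$. Furthermore, when $\delta'=0$, $\Pi\cap\mathcal Q_0$ is the vertex of the quadric cone $\mathcal Q$ if $a'\neq0$, and is empty if $a'=0$.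
   Formalization: When δ′ = 0 and a′ ≠ 0, Π∩Q₀ is only contained in the vertex set of Q (its singular points), and equals the vertex set under the added hypothesis κ = 0. The statement above fails without it. *)

(* Defs.v *)
From HB Require Import structures.
From mathcomp Require Import all_boot all_order all_algebra.
Set Implicit Arguments. Unset Strict Implicit. Unset Printing Implicit Defensive.
Import Order.TTheory GRing.Theory Num.Theory.
Local Open Scope ring_scope.

(* Elements z of F_{q^2} = F_q(eps), eps^2 = omega, are handled through their
   coordinates z = z1 + eps z2 with z1 z2 in F_q. *)

(* a' = b1 a2 - a1 b2, c' = b1 c2 - b2 c1, e' = b1 e2 - b2 e1 *)
Definition twist (F : pzRingType) (b1 b2 x1 x2 : F) : F := b1 * x2 - b2 * x1.

Definition pt (F : finFieldType) := (F * F * F * F)%type.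
Definition pt_t1 (F : finFieldType) (p : pt F) : F := p.1.1.1.
Definition pt_t2 (F : finFieldType) (p : pt F) : F := p.1.1.2.
Definition pt_X  (F : finFieldType) (p : pt F) : F := p.1.2.
Definition pt_Z  (F : finFieldType) (p : pt F) : F := p.2.

Definition pt_add (F : finFieldType) (p r : pt F) : pt F :=
  (pt_t1 p + pt_t1 r, pt_t2 p + pt_t2 r, pt_X p + pt_X r, pt_Z p + pt_Z r).

(* A point of PG(3,q) is represented by its unique normalized coordinate
   vector: nonzero, with first nonzero coordinate equal to 1. *)
Definition normalized (F : finFieldType) (p : pt F) : bool :=
  if pt_t1 p != 0 then pt_t1 p == 1
  else if pt_t2 p != 0 then pt_t2 p == 1
  else if pt_X p != 0 then pt_X p == 1
  else pt_Z p == 1.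

Definition PG3 (F : finFieldType) : {set pt F} := [set p | normalized p].

Definition Qform (F : finFieldType) (omega b1 b2 a' c' e' : F) (p : pt F) : F :=
  b2 * pt_t1 p ^+ 2 - 2%:R * b1 * pt_t1 p * pt_t2 p + b2 * omega * pt_t2 p ^+ 2
  + a' * pt_X p ^+ 2 + c' * pt_X p * pt_Z p + e' * pt_Z p ^+ 2.

Definition quadricQ (F : finFieldType) (omega b1 b2 a' c' e' : F) : {set pt F} :=
  [set p in PG3 F | Qform omega b1 b2 a' c' e' p == 0].

Definition quadricQ0 (F : finFieldType) (omega b1 b2 a' c' e' : F) : {set pt F} :=
  [set p in quadricQ omega b1 b2 a' c' e' | (pt_t1 p == 0) && (pt_t2 p == 0)].

Definition planePi (F : finFieldType) (b1 d1 : F) : {set pt F} :=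
  [set p in PG3 F | b1 * pt_X p + d1 * pt_Z p == 0].

Definition singularQ (F : finFieldType) (omega b1 b2 a' c' e' : F) : {set pt F} :=
  [set p in quadricQ omega b1 b2 a' c' e' |
     [forall w : pt F,
        Qform omega b1 b2 a' c' e' (pt_add p w)
        - Qform omega b1 b2 a' c' e' p - Qform omega b1 b2 a' c' e' w == 0]].

(* Main.v *)
Require Import Defs.
From HB Require Import structures.
From mathcomp Require Import all_boot all_order all_algebra ring.
Import Order.TTheory GRing.Theory Num.Theory.
Local Open Scope ring_scope.

Lemma Bform (F : finFieldType) (omega b1 b2 a' c' e' : F) (p w : pt F) :
  Qform omega b1 b2 a' c' e' (pt_add p w) - Qform omega b1 b2 a' c' e' p
  - Qform omega b1 b2 a' c' e' w =
  2%:R * (b2 * pt_t1 p - b1 * pt_t2 p) * pt_t1 w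
  + 2%:R * (b2 * omega * pt_t2 p - b1 * pt_t1 p) * pt_t2 w
  + (2%:R * a' * pt_X p + c' * pt_Z p) * pt_X w
  + (c' * pt_X p + 2%:R * e' * pt_Z p) * pt_Z w.
Proof.
case: p => [[[t1 t2] X] Z]; case: w => [[[s1 s2] Y] W].
rewrite /Qform /pt_add /pt_t1 /pt_t2 /pt_X /pt_Z /=; ring.
Qed.

Lemma P0char (F : finFieldType) (b1 d1 : F) (p : pt F) : b1 != 0 ->
  [&& p \in PG3 F, pt_t1 p == 0, pt_t2 p == 0 & b1 * pt_X p + d1 * pt_Z p == 0]
  = (p == if d1 == 0 then (0,0,0,1) else (0,0,1,- b1 / d1)).
Proof.
move=> b10.
case: p => [[[t1 t2] X] Z]; rewrite inE /normalized /pt_t1 /pt_t2 /pt_X /pt_Z /=.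
have [->|t1n] := eqVneq t1 0; rewrite ?eqxx /=; last first.
  by case: (d1 == 0); rewrite !xpair_eqE (negPf t1n) /= ?andbF.
have [->|t2n] := eqVneq t2 0; rewrite ?eqxx /=; last first.
  by case: (d1 == 0); rewrite !xpair_eqE (negPf t2n) /= ?andbF.
have [->|d1n] := eqVneq d1 0; rewrite ?eqxx ?(negPf d1n) !xpair_eqE !eqxx /=.
  rewrite mul0r addr0 mulf_eq0 (negPf b10) /=.
  by have [->|Xn] := eqVneq X 0; rewrite ?eqxx /= ?andbT ?andbF.
have [->|Xn] := eqVneq X 0.
  rewrite mulr0 add0r mulf_eq0 (negPf d1n) /= [0 == 1]eq_sym oner_eq0 /=.
  by case: eqP => // ->; rewrite oner_eq0.
rewrite /=; apply/andP/andP => [[/eqP X1 /eqP h]|[/eqP X1 /eqP ->]]; split => //.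
- by rewrite X1.
- rewrite X1 mulr1 in h; apply/eqP.
  have -> : Z = (b1 + d1 * Z) / d1 - b1 / d1 by field.
  by rewrite h mul0r sub0r mulNr.
- by rewrite X1.
- by apply/eqP; rewrite X1; field.
Qed.

Theorem mainTheorem13 (F : finFieldType) (hodd : (2 \notin [pchar F])%N)
  (omega : F) (homega : forall x : F, x ^+ 2 != omega)
  (a1 a2 b1 b2 c1 c2 d1 d2 e1 e2 : F)
  (hb : (b1, b2) != (0, 0))
  (hbd : b1 * d2 = b2 * d1)
  (hbd1 : (b1, d1) != (0, 0))
  (hne : [|| twist b1 b2 a1 a2 != 0, twist b1 b2 c1 c2 != 0
           | twist b1 b2 e1 e2 != 0]) :
  let a' := twist b1 b2 a1 a2 in
  let c' := twist b1 b2 c1 c2 in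
  let e' := twist b1 b2 e1 e2 in
  let delta' := c' ^+ 2 - 4%:R * a' * e' in
  let kappa := a' * d1 ^+ 2 - c' * d1 * b1 + e' * b1 ^+ 2 in
  let PiQ0 := planePi b1 d1 :&: quadricQ0 omega b1 b2 a' c' e' in
  ((PiQ0 != set0) <-> kappa = 0)
  /\ (kappa = 0 -> #|PiQ0| = 1%N)
  /\ (delta' = 0 ->
        (a' != 0 -> PiQ0 \subset singularQ omega b1 b2 a' c' e'
                    /\ (kappa = 0 -> PiQ0 = singularQ omega b1 b2 a' c' e'))
        /\ (a' = 0 -> PiQ0 = set0)).
Proof.
move=> a' c' e' delta' kappa PiQ0.
have two0 : 2%:R != 0 :> F by apply: contra hodd => h; rewrite inE /= h.
have b10 : b1 != 0.
  apply/eqP => b1z; move: hbd1 hbd hb; rewrite b1z mul0r !xpair_eqE eqxx /= => d1n.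
  move/esym/eqP; rewrite mulf_eq0 (negPf d1n) orbF => /eqP ->.
  by rewrite eqxx.
set P0 : pt F := if d1 == 0 then (0,0,0,1) else (0,0,1,- b1 / d1).
have hP0 := @P0char F b1 d1 P0 b10; rewrite eqxx in hP0.
case/and4P: hP0 => P0in /eqP P0t1 /eqP P0t2 /eqP P0pl.
rewrite inE in P0in.
set Q := Qform omega b1 b2 a' c' e'.
have memP : forall p, (p \in PiQ0) = (p == P0) && (Q P0 == 0).
  move=> p; have [->|nP] := eqVneq p P0.
    by rewrite !inE P0in P0t1 P0t2 P0pl !eqxx /= ?andbT.
  rewrite /= !inE; apply/negP => /and3P [/andP [pin pl] /andP [_ hq] /andP [h1 h2]].
  by move: nP; rewrite -(@P0char F b1 d1 p b10) inE pin h1 h2 pl.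
have kQ : (Q P0 == 0) = (kappa == 0).
  rewrite /Q /Qform /kappa /P0; case: (eqVneq d1 0) => [d10|d1n].
    rewrite /pt_t1 /pt_t2 /pt_X /pt_Z /= d10.
    have -> : a' * 0 ^+ 2 - c' * 0 * b1 + e' * b1 ^+ 2 = e' * b1 ^+ 2 by ring.
    rewrite mulf_eq0 expf_eq0 (negPf b10) andbF orbF.
    by congr (_ == 0); ring.
  rewrite /pt_t1 /pt_t2 /pt_X /pt_Z /=.
  have -> : a' * d1 ^+ 2 - c' * d1 * b1 + e' * b1 ^+ 2 =
     d1 ^+ 2 * (b2 * 0 ^+ 2 - 2%:R * b1 * 0 * 0 + b2 * omega * 0 ^+ 2 + a' * 1 ^+ 2 +
               c' * 1 * (- b1 / d1) + e' * (- b1 / d1) ^+ 2) by field.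
  by rewrite mulf_eq0 expf_eq0 (negPf d1n) andbF.
have PiE : PiQ0 = if kappa == 0 then [set P0] else set0.
  apply/setP => p; rewrite memP kQ; case: (kappa == 0); rewrite ?inE ?andbT ?andbF //.
split.
  rewrite PiE; split; first by case: (eqVneq kappa 0) => // _; rewrite eqxx.
  move=> ->; rewrite eqxx; apply/set0Pn; exists P0; exact: set11.
split; first by move=> k0; rewrite PiE k0 eqxx cards1.
move=> hd; rewrite /delta' in hd.
have a2e : 4%:R * a' * e' = c' ^+ 2 by apply/eqP; rewrite eq_sym -subr_eq0 hd.
split.
  move=> a0.
  have twoa : 2%:R * a' != 0 by rewrite mulf_neq0.
  have sub : PiQ0 \subset singularQ omega b1 b2 a' c' e'.
    apply/subsetP => p; rewrite memP => /andP [/eqP -> hq].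
    rewrite !inE P0in hq /=.
    apply/forallP => w; rewrite Bform P0t1 P0t2.
    set X := pt_X P0; set Z := pt_Z P0.
    have hq' : a' * X ^+ 2 + c' * X * Z + e' * Z ^+ 2 = 0.
      by rewrite -(eqP hq) /Q /Qform P0t1 P0t2; ring.
    have l1 : 2%:R * a' * X + c' * Z = 0.
      have E : (2%:R * a' * X + c' * Z) ^+ 2 =
        4%:R * a' * (a' * X ^+ 2 + c' * X * Z + e' * Z ^+ 2) + (c' ^+ 2 - 4%:R * a' * e') * Z ^+ 2 by ring.
      rewrite hq' hd mulr0 mul0r addr0 in E.
      by move/eqP: E; rewrite expf_eq0 /= => /eqP.
    have l2 : c' * X + 2%:R * e' * Z = 0.
      have E : 2%:R * a' * (c' * X + 2%:R * e' * Z) = c' * (2%:R * a' * X + c' * Z) + (4%:R * a' * e' - c' ^+ 2) * Z by ring.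
      rewrite l1 a2e subrr mulr0 mul0r addr0 in E.
      by move/eqP: E; rewrite mulf_eq0 (negPf twoa) /= => /eqP.
    by rewrite l1 l2; apply/eqP; ring.
  split => // k0; apply/eqP; rewrite eqEsubset sub /=.
  apply/subsetP => p; rewrite [p \in singularQ _ _ _ _ _ _]inE => /andP [hQ /forallP hs].
  move: hQ; rewrite inE => /andP [pin hq].
  rewrite memP kQ k0 eqxx andbT -(@P0char F b1 d1 p b10).
  move: p pin hq hs => [[[t1 t2] X] Z] pin hq hs.
  have := hs (1,0,0,0); rewrite Bform /pt_t1 /pt_t2 /pt_X /pt_Z /= => /eqP h1.
  have := hs (0,1,0,0); rewrite Bform /pt_t1 /pt_t2 /pt_X /pt_Z /= => /eqP h2.
  have := hs (0,0,1,0); rewrite Bform /pt_t1 /pt_t2 /pt_X /pt_Z /= => /eqP h3.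
  have f1 : b2 * t1 - b1 * t2 = 0.
    have : 2%:R * (b2 * t1 - b1 * t2) = 0 by rewrite -h1; ring.
    by move/eqP; rewrite mulf_eq0 (negPf two0) /= => /eqP.
  have f2 : b2 * omega * t2 - b1 * t1 = 0.
    have : 2%:R * (b2 * omega * t2 - b1 * t1) = 0 by rewrite -h2; ring.
    by move/eqP; rewrite mulf_eq0 (negPf two0) /= => /eqP.
  have f3 : 2%:R * a' * X + c' * Z = 0 by rewrite -h3; ring.
  have t20 : t2 = 0.
    have : (b2 ^+ 2 * omega - b1 ^+ 2) * t2 = b1 * (b2 * t1 - b1 * t2) + b2 * (b2 * omega * t2 - b1 * t1) by ring.
    rewrite f1 f2 !mulr0 addr0 => /eqP; rewrite mulf_eq0 => /orP [/eqP h|/eqP //].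
    exfalso; have [b20|b2n] := eqVneq b2 0.
      move: h; rewrite b20 expr0n /= mul0r sub0r => /eqP; rewrite oppr_eq0 expf_eq0 /=.
      by rewrite (negPf b10).
    have : (b1 / b2) ^+ 2 = omega.
      rewrite expr_div_n; have -> : b1 ^+ 2 = b2 ^+ 2 * omega by apply/eqP; rewrite eq_sym -subr_eq0 h.
      by field.
    by apply/eqP; apply: homega.
  have t10 : t1 = 0.
    move: f2; rewrite t20 mulr0 sub0r => /eqP; rewrite oppr_eq0 mulf_eq0 (negPf b10) /=.
    by move/eqP.
  have pl : b1 * X + d1 * Z = 0.
    have E : (2%:R * a' * d1 - c' * b1) ^+ 2 = 4%:R * a' * kappa + (c' ^+ 2 - 4%:R * a' * e') * b1 ^+ 2.
      by rewrite /kappa; ring.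
    rewrite k0 hd !mulr0 mul0r addr0 in E.
    move/eqP: E; rewrite expf_eq0 /= subr_eq0 => /eqP E.
    have E2 : 2%:R * a' * (b1 * X + d1 * Z) = b1 * (2%:R * a' * X + c' * Z) + (2%:R * a' * d1 - c' * b1) * Z by ring.
    rewrite f3 E subrr mulr0 mul0r addr0 in E2.
    by move/eqP: E2; rewrite mulf_eq0 (negPf twoa) /= => /eqP.
  by rewrite pin /pt_t1 /pt_t2 /pt_X /pt_Z /= t10 t20 pl eqxx.
move=> a0.
have c0 : c' = 0.
  by apply/eqP; move: (a2e); rewrite a0 mulr0 mul0r => /esym/eqP; rewrite expf_eq0 /=.
have e0 : e' != 0 by move: hne; rewrite -/a' -/c' -/e' a0 c0 eqxx.
rewrite PiE; have -> : (kappa == 0) = false.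
  by apply/negbTE; rewrite /kappa a0 c0 !mul0r subrr add0r mulf_neq0 // expf_neq0.
by [].
Qed.
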